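(* Let $\varphi$ be an LTL formula in PNF and let $\mathcal{A}(\varphi)=(Q,\Sigma,\delta,\alpha_0,F)$ be the alternating $\omega$-automaton with $Q=\partial^+(\varphi)$, $\delta(\psi,x)=\partial_x(\psi)$ for all $\psi\in Q$ and $x\in\Sigma$, initial states $\alpha_0=\mathrm{simp}(\varphi)$, and $F=\{\mathbf{tt}\}\cup\{\varphi_1\,\mathcal{R}\,\psi_1 \mid \varphi_1\,\mathcal{R}\,\psi_1\in Q\}$. Then $\mathcal{L}(\varphi)=\mathcal{L}(\mathcal{A}(\varphi))$ under the Büchi acceptance condition.
   Context: LTL formulae in PNF: $\varphi,\psi ::= p \mid \neg p \mid \mathbf{tt} \mid \mathbf{ff} \mid \varphi\wedge\psi \mid \varphi\vee\psi \mid \bigcirc\varphi \mid \varphi\,\mathcal{U}\,\psi \mid \varphi\,\mathcal{R}\,\psi$ with the standard semantics over $\sigma\in\Sigma^\omega$ and an interpretation $I:\Sigma\to\mathcal{P}(AP)$; $\mathcal{L}(\varphi)=\{\sigma\mid\sigma\models\varphi\}$. Temporal formula: does not start with $\wedge$ or $\vee$. Monomials $\mu,\nu$: $\mathbf{ff}$ or consistent sets of literals; $x\models\mu$ means every literal of $\mu$ holds under $I(x)$; $\mu\sqcap\nu$ is $\mathbf{ff}$ if either is $\mathbf{ff}$ or $\mu\cup\nu$ is contradictory, else $\mu\cup\nu$. $\varphi\,\dot\wedge\,\psi$ denotes formal conjunction, normalized modulo associativity, commutativity, idempotence ($\mathbf{tt}$ is the empty formal conjunction). $\mathrm{simp}(\varphi\wedge\psi)=\{\varphi'\,\dot\wedge\,\psi'\mid\varphi'\in\mathrm{simp}(\varphi),\psi'\in\mathrm{simp}(\psi)\}$,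 $\mathrm{simp}(\varphi\vee\psi)=\mathrm{simp}(\varphi)\cup\mathrm{simp}(\psi)$, $\mathrm{simp}(\varphi)=\{\varphi\}$ for temporal $\varphi$. Linear factors $\mathrm{LF}$: $\mathrm{LF}(\ell)=\{\langle\{\ell\},\mathbf{tt}\rangle\}$, $\mathrm{LF}(\mathbf{tt})=\{\langle\mathbf{tt},\mathbf{tt}\rangle\}$, $\mathrm{LF}(\mathbf{ff})=\{\}$, $\mathrm{LF}(\varphi\vee\psi)=\mathrm{LF}(\varphi)\cup\mathrm{LF}(\psi)$, $\mathrm{LF}(\varphi\wedge\psi)=\{\langle\mu\sqcap\nu,\varphi'\,\dot\wedge\,\psi'\rangle\mid\langle\mu,\varphi'\rangle\in\mathrm{LF}(\varphi),\langle\nu,\psi'\rangle\in\mathrm{LF}(\psi),\mu\sqcap\nu\neq\mathbf{ff}\}$, $\mathrm{LF}(\bigcirc\varphi)=\{\langle\mathbf{tt},\varphi'\rangle\mid\varphi'\in\mathrm{simp}(\varphi)\}$, $\mathrm{LF}(\varphi\,\mathcal{U}\,\psi)=\mathrm{LF}(\psi)\cup\{\langle\mu,\varphi'\,\dot\wedge\,(\varphi\,\mathcal{U}\,\psi)\rangle\mid\langle\mu,\varphi'\rangle\in\mathrm{LF}(\varphi)\}$, $\mathrm{LF}(\varphi\,\mathcal{R}\,\psi)=\{\langle\mu\sqcap\nu,\varphi'\,\dot\wedge\,\psi'\rangle\mid\langle\mu,\varphi'\rangle\in\mathrm{LF}(\varphi),\langle\nu,\psi'\rangle\in\mathrm{LF}(\psi),\mu\sqcap\nu\neq\mathbf{ff}\}\cup\{\langle\nu,\psi'\,\dot\wedge\,(\varphi\,\mathcal{R}\,\psi)\rangle\mid\langle\nu,\psi'\rangle\in\mathrm{LF}(\psi)\}$.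 Partial derivatives: $\partial_x(\varphi)=\{\varphi'\mid\langle\mu,\varphi'\rangle\in\mathrm{LF}(\varphi),x\models\mu\}$ for temporal $\varphi$; $\partial_x(\mathbf{tt})=\{\mathbf{tt}\}$; $\partial_x(\varphi\,\dot\wedge\,\psi)=\{\varphi'\,\dot\wedge\,\psi'\mid\varphi'\in\partial_x(\varphi),\psi'\in\partial_x(\psi)\}$. Iterated partial derivatives (subformula set): $\partial^+(\ell)=\{\ell\}$, $\partial^+(\mathbf{tt})=\{\mathbf{tt}\}$, $\partial^+(\mathbf{ff})=\{\mathbf{ff}\}$, $\partial^+(\varphi\vee\psi)=\partial^+(\varphi\wedge\psi)=\partial^+(\varphi)\cup\partial^+(\psi)$, $\partial^+(\bigcirc\varphi)=\{\bigcirc\varphi\}\cup\partial^+(\varphi)$, $\partial^+(\varphi\,\mathcal{U}\,\psi)=\{\varphi\,\mathcal{U}\,\psi\}\cup\partial^+(\varphi)\cup\partial^+(\psi)$, $\partial^+(\varphi\,\mathcal{R}\,\psi)=\{\varphi\,\mathcal{R}\,\psi\}\cup\partial^+(\varphi)\cup\partial^+(\psi)$. An alternating $\omega$-automaton $(Q,\Sigma,\delta,\alpha_0,F)$ has finite state set $Q$, initial condition $\alpha_0$ (a set of sets of states, read as a disjunction of conjunctions), transition function $\delta$ returning a set of conjunctions of states (read as a disjunction), and $F\subseteq Q$. A run on $\sigma$ is a layered digraph with nodes in $Q\times\mathbb{N}$ whose level-0 state set is in $\alpha_0$, every node at level $i+1$ has a predecessor at level $i$, and the successor set of each $(q,i)$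 is in $\delta(q,\sigma_i)$; a run is accepting if every infinite path visits $F$ infinitely often, and $\mathcal{L}(\mathcal{A})$ is the set of words with an accepting run. *)

(* Defs.v *)
From mathcomp Require Import all_boot.
Set Implicit Arguments.
Unset Strict Implicit.
Unset Printing Implicit Defensive.

Inductive form (AP : Type) : Type :=
| Lit of bool & AP          (* Lit true p = p,  Lit false p = ~ p *)
| TT
| FF
| And of form AP & form AP
| Or of form AP & form AP
| Next of form AP
| Until of form AP & form AP
| Release of form AP & form AP.
Arguments TT {AP}.
Arguments FF {AP}.

(* Prop-valued list membership (no decidable equality needed). *)
Fixpoint In (T : Type) (x : T) (s : seq T) : Prop :=
  match s with [::] => False | y :: s' => y = x \/ In x s' end.

Section LTL.
Variables (AP : eqType) (Sigma : Type) (I : Sigma -> AP -> bool).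

(* Standard semantics: sat sigma i phi  <->  the suffix sigma^i |= phi. *)
Fixpoint sat (sigma : nat -> Sigma) (i : nat) (phi : form AP) : Prop :=
  match phi with
  | Lit b p => I (sigma i) p = b
  | TT => True
  | FF => False
  | And a b => sat sigma i a /\ sat sigma i b
  | Or a b => sat sigma i a \/ sat sigma i b
  | Next a => sat sigma i.+1 a
  | Until a b => exists k, i <= k /\ sat sigma k b /\
                   forall j, i <= j -> j < k -> sat sigma j a
  | Release a b => forall k, i <= k -> sat sigma k b \/
                   exists j, i <= j /\ j < k /\ sat sigma j a
  end.

(* Literals and monomials: None = ff, Some s = the set (list) s of literals. *)
Definition lit := (bool * AP)%type.
Definition mono := option (seq lit).
Definition consistent (s : seq lit) : bool :=
  ~~ has (fun l : lit => (~~ l.1, l.2) \in s) s.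
Definition mmeet (m n : mono) : mono :=
  match m, n with
  | Some a, Some b => if consistent (a ++ b) then Some (a ++ b) else None
  | _, _ => None
  end.
Definition msat (x : Sigma) (m : mono) : bool :=
  match m with
  | Some a => all (fun l : lit => I x l.2 == l.1) a
  | None => false
  end.

(* Formal conjunctions: lists of temporal formulas read as finite sets
   (modulo AC and idempotence); tt is the empty formal conjunction. *)
Definition fconj := seq (form AP).
Definition fand (c d : fconj) : fconj := c ++ d.
Definition conj1 (f : form AP) : fconj :=
  match f with TT => [::] | _ => [:: f] end.

Fixpoint simp (phi : form AP) : seq fconj :=
  match phi with
  | And a b => flatten [seq [seq fand c d | d <- simp b] | c <- simp a]
  | Or a b => simp a ++ simp b
  | f => [:: conj1 f]
  end.

Definition lfprod (A B : seq (mono * fconj)) : seq (mono * fconj) :=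
  flatten [seq [seq (mmeet m.1 n.1, fand m.2 n.2)
               | n <- B & mmeet m.1 n.1 != None] | m <- A].

Fixpoint LF (phi : form AP) : seq (mono * fconj) :=
  match phi with
  | Lit b p => [:: (Some [:: (b, p)], [::])]
  | TT => [:: (Some [::], [::])]
  | FF => [::]
  | Or a b => LF a ++ LF b
  | And a b => lfprod (LF a) (LF b)
  | Next a => [seq (Some [::], c) | c <- simp a]
  | Until a b => LF b ++ [seq (m.1, fand m.2 (conj1 (Until a b))) | m <- LF a]
  | Release a b => lfprod (LF a) (LF b) ++
                   [seq (n.1, fand n.2 (conj1 (Release a b))) | n <- LF b]
  end.

Definition pderiv (x : Sigma) (phi : form AP) : seq fconj :=
  [seq m.2 | m <- LF phi & msat x m.1].

(* Iterated partial derivatives (subformula set). *)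
Fixpoint dplus (phi : form AP) : seq (form AP) :=
  match phi with
  | Lit b p => [:: Lit b p]
  | TT => [:: TT]
  | FF => [:: FF]
  | And a b => dplus a ++ dplus b
  | Or a b => dplus a ++ dplus b
  | Next a => Next a :: dplus a
  | Until a b => Until a b :: dplus a ++ dplus b
  | Release a b => Release a b :: dplus a ++ dplus b
  end.

End LTL.

(* Sets of states are predicates S -> Prop;
   the state set is a finite list.  trans q x S  means that the conjunction S
   is one of the disjuncts of delta(q,x); init S means S is in alpha_0. *)
Record aut (S Sig : Type) := Aut {
  states : seq S;
  trans : S -> Sig -> (S -> Prop) -> Prop;
  init : (S -> Prop) -> Prop;
  final : S -> Prop }.

Section Runs.
Variables (S Sig : Type) (A : aut S Sig) (sigma : nat -> Sig).

(* A run: node set L i (states at level i) and edges E i q q' from (q,i) to (q',i+1). *)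
Record is_run (L : nat -> S -> Prop) (E : nat -> S -> S -> Prop) : Prop := {
  run_states : forall i q, L i q -> In q (states A);
  run_init : init A (L 0);
  run_pred : forall i q', L i.+1 q' -> exists q, L i q /\ E i q q';
  run_edge : forall i q q', E i q q' -> L i q /\ L i.+1 q';
  run_trans : forall i q, L i q -> trans A q (sigma i) (E i q) }.

Definition buchi_accepting (E : nat -> S -> S -> Prop) : Prop :=
  forall (i0 : nat) (p : nat -> S),
    (forall k, E (i0 + k) (p k) (p k.+1)) ->
    forall n, exists k, n <= k /\ final A (p k).

Definition accepts : Prop :=
  exists L E, is_run L E /\ buchi_accepting E.
End Runs.

Definition set_of (S : Type) (c : seq S) (X : S -> Prop) : Prop :=
  forall q, X q <-> In q c.

Definition autLTL (AP : eqType) (Sigma : Type) (I : Sigma -> AP -> bool)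
  (phi : form AP) : aut (form AP) Sigma :=
  {| states := dplus phi;
     trans := fun q x X => exists c, In c (pderiv I x q) /\ set_of c X;
     init := fun X => exists c, In c (simp phi) /\ set_of c X;
     final := fun q => q = TT \/
        exists a b, q = Release a b /\ In (Release a b) (dplus phi) |}.

(* Main.v *)
Require Import Defs.
From mathcomp Require Import all_boot zify.
From Stdlib Require Import Classical ClassicalEpsilon.

Section InL.
Variable T : Type.
Lemma In_cat (x : T) s t : In x (s ++ t) <-> In x s \/ In x t.
Proof. elim: s => [|y s IH] /=; tauto. Qed.
Lemma In_map U (f : T -> U) y s : In y (map f s) <-> exists x, In x s /\ f x = y.
Proof.
elim: s => [|z s IH] /=; first by split=> // [[x []]].
split.
- case=> [<-|/IH [x [? ?]]]; [exists z; tauto| exists x; tauto].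
- case=> x [[<-|H] E]; [by left | right; apply/IH; exists x; tauto].
Qed.
Lemma In_filter (p : pred T) x s : In x (filter p s) <-> In x s /\ p x.
Proof.
elim: s => [|z s IH] /=; first tauto.
case pz: (p z) => /=; split.
- case=> [<-|/IH]; tauto.
- case=> [[<-|?] ?]; [by left| right; apply/IH; tauto].
- move/IH; tauto.
- case=> [[<-|?] px]; [by rewrite px in pz | apply/IH; tauto].
Qed.
Lemma In_flatten x (ss : seq (seq T)) : In x (flatten ss) <-> exists s, In s ss /\ In x s.
Proof.
elim: ss => [|s ss IH] /=; first by split=> // [[? []]].
rewrite In_cat IH; split.
- case=> [H|[t [? ?]]]; [exists s; tauto | exists t; tauto].
- case=> t [[<-|?] ?]; [tauto | right; exists t; tauto].
Qed.
End InL.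

Section Sem.
Variables (AP : eqType) (Sigma : Type) (I : Sigma -> AP -> bool) (sigma : nat -> Sigma).
Notation sat := (sat I sigma).
Definition satc i (c : seq (form AP)) := forall f, In f c -> sat i f.

Lemma satc_cat i c d : satc i (c ++ d) <-> satc i c /\ satc i d.
Proof.
rewrite /satc; split.
- by move=> H; split=> f Hf; apply: H; apply/In_cat; tauto.
- by case=> H1 H2 f /In_cat [] ?; auto.
Qed.

Lemma satc1 i f : satc i (conj1 f) <-> sat i f.
Proof.
have H1 : forall g, satc i [:: g] <-> sat i g.
  by move=> g; split; [move=> H; apply: H; left | move=> H h [<-|[]]].
case: f => [b p| | |a b|a b|a|a b|a b]; try exact: H1.
by split => // _ f [].
Qed.

Lemma sem_simp i q : sat i q <-> exists c, In c (simp q) /\ satc i c.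
Proof.
elim: q i => [b p| | |a IHa b IHb|a IHa b IHb|a IHa|a IHa b IHb|a IHa b IHb] i;
  try (split; [move=> H; eexists; split; [by left| by apply/satc1]
              | by case=> c [[<-|[]] /satc1]]).
- simpl; split => [[/IHa [c [Hc Sc]] /IHb [d [Hd Sd]]]|].
  + exists (fand c d); split; last by apply/satc_cat.
    apply/In_flatten; exists [seq fand c d0 | d0 <- simp b]; split.
    * by apply/In_map; exists c.
    * by apply/In_map; exists d.
  + case=> e [/In_flatten [s [/In_map [c [Hc <-]] /In_map [d [Hd <-]]]] /satc_cat [S1 S2]].
    split; [apply/IHa | apply/IHb]; eauto.
- simpl; rewrite IHa IHb; split.
  + case=> [[c [? ?]]|[c [? ?]]]; exists c; rewrite In_cat; tauto.
  + case=> c [/In_cat [] ? ?]; [left|right]; exists c; tauto.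
Qed.

Definition mval (x : Sigma) (m : mono AP) := msat I x m.

Lemma msat_mmeet x m n : msat I x (mmeet m n) = msat I x m && msat I x n.
Proof.
case: m => [a|] //; case: n => [b|] /=; last by rewrite andbF.
case: ifP => [_|]; first by rewrite /= all_cat.
rewrite /consistent => /negbFE/hasP [l Hl Hl'].
apply/esym/negbTE/negP => /andP [Ha Hb].
have /allP H : all (fun l : lit AP => I x l.2 == l.1) (a ++ b) by rewrite all_cat Ha Hb.
move: (H _ Hl) (H _ Hl') => /= /eqP ->.
by case: (l.1).
Qed.

Lemma In_lfprod (A B : seq (mono AP * fconj AP)) m c :
  In (m, c) (lfprod A B) <-> exists m1 c1 m2 c2, In (m1, c1) A /\ In (m2, c2) B /\
     mmeet m1 m2 != None /\ m = mmeet m1 m2 /\ c = c1 ++ c2.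
Proof.
rewrite /lfprod In_flatten; split.
- case=> s [/In_map [[m1 c1] [H1 <-]] /In_map [[m2 c2] [/In_filter [H2 Hn] [<- <-]]]].
  by exists m1, c1, m2, c2.
- case=> m1 [c1 [m2 [c2 [H1 [H2 [Hn [-> ->]]]]]]].
  eexists; split; first by apply/In_map; exists (m1, c1); split; [exact H1| reflexivity].
  apply/In_map; exists (m2, c2); split => //; apply/In_filter; done.
Qed.

Lemma sem_until i a b : sat i (Until a b) <-> sat i b \/ (sat i a /\ sat i.+1 (Until a b)).
Proof.
simpl; split.
- case=> k [hk [hb ha]].
  have [ik|ki] := ltnP i k.
  + right; split; first by apply: ha.
    exists k; split => //; split => // j ? ?; apply: ha; lia.
  + have E : k = i by lia.
    by subst k; left.
- case=> [hb|[ha [k [hk [hb hk']]]]].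
  + exists i; split => //; split => // j ? ?; lia.
  + exists k; split; first lia; split => // j ? ?.
    have [ij|ji] := ltnP i j; first (apply: hk'; lia).
    have E : j = i by lia.
    by subst j.
Qed.

Lemma sem_release i a b : sat i (Release a b) <-> sat i b /\ (sat i a \/ sat i.+1 (Release a b)).
Proof.
simpl; split.
- move=> H; split.
  + by case: (H i (leqnn i)) => // [[j [? [? ?]]]]; lia.
  + case: (classic (sat i a)) => ha; [by left| right].
    move=> k hk; case: (H k (ltnW hk)) => [|[j [hj [hjk hja]]]]; first by left.
    right; exists j; split => //.
    have [ij|ji] := ltnP i j => //.
    have E : j = i by lia.
    by subst j.
- case=> hb [ha|hr] k hk.
  + have [ik|ki] := ltnP i k.
    * right; exists i; split => //.
    * have E : k = i by lia.
      by subst k; left.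
  + have [ik|ki] := ltnP i k.
    * case: (hr k ik) => [?|[j [? [? ?]]]]; first by left.
      right; exists j; split => //; lia.
    * have E : k = i by lia.
      by subst k; left.
Qed.

Lemma sem_LF q i : sat i q <-> exists m c, In (m, c) (LF q) /\ msat I (sigma i) m /\ satc i.+1 c.
Proof.
elim: q i => [b p| | |a IHa b IHb|a IHa b IHb|a _|a IHa b IHb|a IHa b IHb] i /=.
- split.
  + move=> H; exists (Some [:: (b, p)]), [::]; split; first by left.
    by rewrite /= H eqxx; split => // f [].
  + by case=> m [c [[[<- _]|[]] [/= /andP [/eqP ? _] _]]].
- split => // _; exists (Some [::]), [::]; split; first by left. by split => // f [].
- by split => // [[m [c [[]]]]].
- split.
  + case=> /IHa [m1 [c1 [H1 [M1 S1]]]] /IHb [m2 [c2 [H2 [M2 S2]]]].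
    exists (mmeet m1 m2), (c1 ++ c2); split.
    * apply/In_lfprod; exists m1, c1, m2, c2; repeat split => //.
      by apply/eqP => E; move: (msat_mmeet (sigma i) m1 m2); rewrite E M1 M2.
    * by rewrite msat_mmeet M1 M2; split => //; apply/satc_cat.
  + case=> m [c [/In_lfprod [m1 [c1 [m2 [c2 [H1 [H2 [_ [-> ->]]]]]]]]]].
    rewrite msat_mmeet => [[/andP [M1 M2] /satc_cat [S1 S2]]].
    split; [apply/IHa | apply/IHb]; eauto.
- rewrite IHa IHb; split.
  + case=> [[m [c [? ?]]]|[m [c [? ?]]]]; exists m, c; rewrite In_cat; tauto.
  + case=> m [c [/In_cat [] ? ?]]; [left|right]; exists m, c; tauto.
- rewrite (sem_simp i.+1 a); split.
  + case=> c [Hc Sc]; exists (Some [::]), c; split => //.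
    by apply/In_map; exists c.
  + by case=> m [c [/In_map [d [Hd [<- <-]]] [_ Sc]]]; exists d.
- rewrite -/(sat i (Until a b)) sem_until IHa IHb; split.
  + case=> [[m [c [H [M S]]]]|[[m [c [H [M S]]]] HU]].
    * exists m, c; rewrite In_cat; tauto.
    * exists m, (c ++ [:: Until a b]); split.
      -- apply/In_cat; right; apply/In_map; exists (m, c); done.
      -- split => //; apply/satc_cat; split => // f [<-|[]] //.
  + case=> m [c [/In_cat [H|/In_map [[m' c'] [H [<- <-]]]] [M S]]].
    * left; exists m, c; tauto.
    * move: S => /= /satc_cat [S1 S2]; right; split; first by exists m', c'.
      exact: (S2 _ (or_introl erefl)).
- rewrite -/(sat i (Release a b)) sem_release IHa IHb; split.
  + case=> [[m2 [c2 [H2 [M2 S2]]]] [[m1 [c1 [H1 [M1 S1]]]]|HR]].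
    * exists (mmeet m1 m2), (c1 ++ c2); split.
      -- apply/In_cat; left; apply/In_lfprod; exists m1, c1, m2, c2; repeat split => //.
         by apply/eqP => E; move: (msat_mmeet (sigma i) m1 m2); rewrite E M1 M2.
      -- by rewrite msat_mmeet M1 M2; split => //; apply/satc_cat.
    * exists m2, (c2 ++ [:: Release a b]); split.
      -- apply/In_cat; right; apply/In_map; exists (m2, c2); done.
      -- split => //; apply/satc_cat; split => // f [<-|[]] //.
  + case=> m [c [/In_cat [/In_lfprod [m1 [c1 [m2 [c2 [H1 [H2 [_ [-> ->]]]]]]]]|/In_map [[m' c'] [H [<- <-]]]]]].
    * rewrite msat_mmeet => [[/andP [M1 M2] /satc_cat [S1 S2]]].
      split; [exists m2, c2 | left; exists m1, c1]; tauto.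
    * move=> [M /= /satc_cat [S1 S2]]; split; first by exists m', c'.
      by right; exact: (S2 _ (or_introl erefl)).
Qed.
End Sem.

Section Struct.
Variables (AP : eqType).

Fixpoint fsize (f : form AP) : nat :=
  match f with
  | And a b | Or a b | Until a b | Release a b => (fsize a + fsize b).+1
  | Next a => (fsize a).+1
  | _ => 0
  end.

Definition isUR (f : form AP) : bool :=
  match f with Until _ _ | Release _ _ => true | _ => false end.

Lemma dplus_size f g : In f (dplus g) -> fsize f <= fsize g.
Proof.
elim: g => [b p| | |a IHa b IHb|a IHa b IHb|a IHa|a IHa b IHb|a IHa b IHb] /=;
  try (by case=> [<-|[]]);
  try (by move/In_cat => [/IHa|/IHb] /=; lia).
- by case=> [<-|/IHa] /=; lia.
- by case=> [<-|/In_cat [/IHa|/IHb]] /=; lia.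
- by case=> [<-|/In_cat [/IHa|/IHb]] /=; lia.
Qed.

Lemma dplus_trans (g h : form AP) : In g (dplus h) -> forall f, In f (dplus g) -> In f (dplus h).
Proof.
elim: h => [b p| | |a IHa b IHb|a IHa b IHb|a IHa|a IHa b IHb|a IHa b IHb] /=.
- by case=> [<-|[]].
- by case=> [<-|[]].
- by case=> [<-|[]].
- by move/In_cat => [/IHa H|/IHb H] f /H ?; apply/In_cat; tauto.
- by move/In_cat => [/IHa H|/IHb H] f /H ?; apply/In_cat; tauto.
- by case=> [<-|/IHa H] f // /H; right.
- case=> [<-|/In_cat [/IHa H|/IHb H]] f //= /H ?; right; apply/In_cat; tauto.
- case=> [<-|/In_cat [/IHa H|/IHb H]] f //= /H ?; right; apply/In_cat; tauto.
Qed.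

Lemma simp_elems q c f : In c (simp q) -> In f c -> In f (dplus q) /\ fsize f <= fsize q.
Proof.
elim: q c => [b p| | |a IHa b IHb|a IHa b IHb|a IHa|a IHa b IHb|a IHa b IHb] c;
  try (by case=> [<-|[]] [<-|[]]; split => //; left).
- by case=> [<-|[]] [].
- move=> /In_flatten [s [/In_map [c1 [H1 <-]] /In_map [c2 [H2 <-]]]] /In_cat [/(IHa _ H1)|/(IHb _ H2)] [? ?];
  (split; [apply/In_cat; tauto | simpl; lia]).
- move=> /In_cat [H1 /(IHa _ H1)|H2 /(IHb _ H2)] [? ?];
  (split; [apply/In_cat; tauto | simpl; lia]).
Qed.

Lemma LF_elems q m c f : In (m, c) (LF q) -> In f c ->
  In f (dplus q) /\ (fsize f < fsize q \/ (f = q /\ isUR q)).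
Proof.
elim: q m c => [b p| | |a IHa b IHb|a IHa b IHb|a IHa|a IHa b IHb|a IHa b IHb] m c /=.
- by case=> [[_ <-]|[]] [].
- by case=> [[_ <-]|[]] [].
- by [].
- move=> /In_lfprod [m1 [c1 [m2 [c2 [H1 [H2 [_ [_ ->]]]]]]]].
  move=> /In_cat [/(IHa _ _ H1)|/(IHb _ _ H2)] [? Hs];
  (split; [apply/In_cat; tauto | left; case: Hs => [|[->]]; lia]).
- move=> /In_cat [H1 /(IHa _ _ H1)|H2 /(IHb _ _ H2)] [? Hs];
  (split; [apply/In_cat; tauto | left; case: Hs => [|[->]]; lia]).
- move=> /In_map [d [Hd [_ <-]]] /(simp_elems _ _ _ Hd) [? ?].
  split; [by right | left; lia].
- move=> /In_cat [H2 /(IHb _ _ H2) [? Hs]|/In_map [[m1 c1] [H1 [_ <-]]] /In_cat [/(IHa _ _ H1) [? Hs]|[<-|[]]]].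
  + split; [right; apply/In_cat; tauto | left; case: Hs => [|[->]]; lia].
  + split; [right; apply/In_cat; tauto | left; case: Hs => [|[->]]; lia].
  + split; [by left | by right].
- move=> /In_cat [/In_lfprod [m1 [c1 [m2 [c2 [H1 [H2 [_ [_ ->]]]]]]]] /In_cat [/(IHa _ _ H1)|/(IHb _ _ H2)] [? Hs]|/In_map [[m2 c2] [H2 [_ <-]]] /In_cat [/(IHb _ _ H2) [? Hs]|[<-|[]]]].
  + split; [right; apply/In_cat; tauto | left; case: Hs => [|[->]]; lia].
  + split; [right; apply/In_cat; tauto | left; case: Hs => [|[->]]; lia].
  + split; [right; apply/In_cat; tauto | left; case: Hs => [|[->]]; lia].
  + split; [by left | by right].
Qed.

Lemma simp_dplus (q : form AP) c f : In c (simp q) -> In f c -> In f (dplus q).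
Proof. by move=> H1 H2; case: (simp_elems _ _ _ H1 H2). Qed.

Lemma In_pderiv (Sigma : Type) (I : Sigma -> AP -> bool) x q c :
  In c (pderiv I x q) <-> exists m, In (m, c) (LF q) /\ msat I x m.
Proof.
rewrite /pderiv In_map; split.
- by case=> [[m c'] [/In_filter [H M] /= <-]]; exists m.
- by case=> m [H M]; exists (m, c); split => //; apply/In_filter.
Qed.
End Struct.

Section Back.
Variables (AP : eqType) (Sigma : Type) (I : Sigma -> AP -> bool) (sigma : nat -> Sigma)
  (phi : form AP) (L : nat -> form AP -> Prop) (E : nat -> form AP -> form AP -> Prop).
Hypothesis (Hrun : is_run (autLTL I phi) sigma L E) (Hbu : buchi_accepting (autLTL I phi) E).
Notation sat := (sat I sigma).

Lemma key i q : L i q -> exists m c, In (m, c) (LF q) /\ msat I (sigma i) m /\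
   forall f, In f c -> L i.+1 f /\ E i q f.
Proof.
move=> Hl; case: (run_trans Hrun Hl) => c [/In_pderiv [m [H M]] Hs].
exists m, c; do 2!split => //.
move=> f /Hs Ef; split => //; exact: (proj2 (run_edge Hrun Ef)).
Qed.

Lemma satc_small q i c (IHq : forall f j, fsize AP f < fsize AP q -> L j f -> sat j f) :
  (forall f, In f c -> L i.+1 f /\ E i q f) ->
  (forall f, In f c -> fsize AP f < fsize AP q) -> satc AP Sigma I sigma i.+1 c.
Proof. by move=> Hc Hsz f Hf; apply: (IHq f); [apply: Hsz | case: (Hc f Hf)]. Qed.

Lemma back_step q (IHq : forall f j, fsize AP f < fsize AP q -> L j f -> sat j f) i :
  L i q -> sat i q.
Proof.
case UR: (isUR AP q).
- move: UR IHq; case: q => // a b _ IHq.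
  +
    have step : forall j, L j (Until a b) ->
        sat j b \/ (sat j a /\ L j.+1 (Until a b) /\ E j (Until a b) (Until a b)).
      move=> j /key [m [c [/In_cat [H|/In_map [[m1 c1] [H1 [<- <-]]]] [M Hc]]]].
      * left; apply/(sem_LF AP Sigma I sigma b j); exists m, c; do 2!split => //.
        apply: (satc_small _ _ _ IHq Hc) => f Hf.
        case: (LF_elems AP b m c f H Hf) => _ [|[-> _]] /=; lia.
      * right; move: Hc => /= Hc; split.
          apply/(sem_LF AP Sigma I sigma a j); exists m1, c1; do 2!split => //.
          move=> f Hf; apply: (IHq f j.+1); last by case: (Hc f); [apply/In_cat; left|].
          case: (LF_elems AP a m1 c1 f H1 Hf) => _ [|[-> _]] /=; lia.
        have HU : In (Until a b) (c1 ++ [:: Until a b]) by apply/In_cat; right; left.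
        exact: (Hc _ HU).
    move=> Hl; apply: NNPP => Hn.
    have Q : forall k, L (i + k) (Until a b) /\ (forall j, i <= j -> j < i + k -> sat j a).
      elim=> [|k [Hk Ha]]; first by rewrite addn0; split => // j ? ?; lia.
      case: (step _ Hk) => [hb|[ha [HL _]]].
      + by case: Hn; exists (i + k); split; [lia | split].
      + rewrite addnS; split => // j ? ?.
        have [jk|kj] := ltnP j (i + k); first by apply: Ha.
        have -> : j = i + k by lia.
        done.
    have HE : forall k, E (i + k) (Until a b) (Until a b).
      move=> k; case: (Q k) => Hk Ha; case: (step _ Hk) => [hb|[_ [_ ?]]] //.
      by case: Hn; exists (i + k); split; [lia | split].
    case: (Hbu i (fun _ => Until a b) HE 0) => k [_ []] //.
    by case=> a' [b' [E' _]].
  +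
    have step : forall j, L j (Release a b) ->
        sat j b /\ (sat j a \/ L j.+1 (Release a b)).
      move=> j /key [m [c [/In_cat [/In_lfprod [m1 [c1 [m2 [c2 [H1 [H2 [_ [-> ->]]]]]]]]|/In_map [[m2 c2] [H2 [<- <-]]]] [M Hc]]]].
      * move: M; rewrite msat_mmeet => /andP [M1 M2].
        have Hsmall : forall f, In f (c1 ++ c2) -> sat j.+1 f.
          move=> f Hf; apply: (IHq f j.+1); last by case: (Hc f Hf).
          case/In_cat: Hf => Hf.
          - case: (LF_elems AP a m1 c1 f H1 Hf) => _ [|[-> _]] /=; lia.
          - case: (LF_elems AP b m2 c2 f H2 Hf) => _ [|[-> _]] /=; lia.
        split; [apply/(sem_LF AP Sigma I sigma b j); exists m2, c2
               | left; apply/(sem_LF AP Sigma I sigma a j); exists m1, c1];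
          (split; [done | split; [done | move=> f Hf; apply: Hsmall; apply/In_cat; tauto]]).
      * move: Hc => /= Hc; split.
          apply/(sem_LF AP Sigma I sigma b j); exists m2, c2; split; [done|split; [done|]].
          move=> f Hf; apply: (IHq f j.+1); last by case: (Hc f); [apply/In_cat; left|].
          case: (LF_elems AP b m2 c2 f H2 Hf) => _ [|[-> _]] /=; lia.
        have HU : In (Release a b) (c2 ++ [:: Release a b]) by apply/In_cat; right; left.
        by right; case: (Hc _ HU).
    have G : forall d j, L j (Release a b) ->
        sat (j + d) b \/ exists j', j <= j' /\ j' < j + d /\ sat j' a.
      elim=> [|d IH] j Hj; first by rewrite addn0; left; case: (step _ Hj).
      case: (step _ Hj) => _ [ha|HL].
      * by right; exists j; split => //; split => //; lia.
      * case: (IH _ HL) => [hb|[j' [? [? ?]]]].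
        -- by left; rewrite addnS -addSn.
        -- by right; exists j'; split; [lia|split => //; lia].
    move=> Hl /= k hk; have -> : k = i + (k - i) by lia.
    exact: G.
- move=> /key [m [c [H [M Hc]]]].
  apply/(sem_LF AP Sigma I sigma q i); exists m, c; do 2!split => //.
  apply: (satc_small _ _ _ IHq Hc) => f Hf.
  by case: (LF_elems AP q m c f H Hf) => _ [//|[_]]; rewrite UR.
Qed.

Lemma back_all q i : L i q -> sat i q.
Proof.
suff : forall n q i, fsize AP q < n -> L i q -> sat i q by apply; apply: ltnSn.
elim=> [//|n IH] q' i' Hs; apply: back_step => f j Hf; apply: IH; lia.
Qed.
End Back.

Section Fwd.
Variables (AP : eqType) (Sigma : Type) (I : Sigma -> AP -> bool) (sigma : nat -> Sigma)
  (phi : form AP).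
Hypothesis Hphi : sat I sigma 0 phi.
Notation sat := (sat I sigma).
Notation satc := (satc AP Sigma I sigma).

Definition good i q (c : fconj AP) := In c (pderiv I (sigma i) q) /\ satc i.+1 c /\
  (forall a b, q = Until a b -> sat i b -> In c (pderiv I (sigma i) b)).

Lemma good_ex i q : sat i q -> exists c, good i q c.
Proof.
move=> Hq.
case: (classic (exists a b, q = Until a b /\ sat i b)) => [[a [b [Eq Hb]]]|Hn].
- subst q; case/(sem_LF AP Sigma I sigma b i): Hb => m [c [H [M S]]].
  have Hd : In c (pderiv I (sigma i) b) by apply/In_pderiv; exists m.
  exists c; split; last split => //.
  + by apply/In_pderiv; exists m; split => //; apply/In_cat; left.
  + by move=> a' b' [_ <-].
- case/(sem_LF AP Sigma I sigma q i): Hq => m [c [H [M S]]].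
  exists c; split; last split => //.
  + by apply/In_pderiv; exists m.
  + by move=> a b Eq Hb; case: Hn; exists a, b.
Qed.

Definition ch i q : fconj AP := epsilon (inhabits [::]) (good i q).
Definition c0 : fconj AP := epsilon (inhabits [::]) (fun c => In c (simp phi) /\ satc 0 c).

Lemma c0_spec : In c0 (simp phi) /\ satc 0 c0.
Proof. apply: (epsilon_spec (inhabits [::]) (fun c => In c (simp phi) /\ satc 0 c)).
by apply/(sem_simp AP Sigma I sigma 0 phi). Qed.

Lemma ch_spec i q : sat i q -> good i q (ch i q).
Proof. by move=> H; apply: epsilon_spec; apply: good_ex. Qed.

Fixpoint Lf (i : nat) : form AP -> Prop :=
  match i with
  | 0 => fun q => In q c0
  | j.+1 => fun q' => exists q, Lf j q /\ In q' (ch j q)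
  end.
Definition Ef i q q' := Lf i q /\ In q' (ch i q).

Lemma inv i q : Lf i q -> sat i q /\ In q (dplus phi).
Proof.
elim: i q => [|i IH] q /=.
- move=> H; case: c0_spec => H1 H2; split; first exact: H2.
  exact: (simp_dplus _ _ _ _ H1 H).
- case=> q0 [/IH [S0 D0] Hin].
  case: (ch_spec _ _ S0) => /In_pderiv [m [HL _]] [Sc _].
  split; first exact: Sc.
  case: (LF_elems AP q0 m _ q HL Hin) => Dq _.
  exact: (dplus_trans _ _ _ D0 _ Dq).
Qed.

Lemma run_ok : is_run (autLTL I phi) sigma Lf Ef.
Proof.
split.
- by move=> i q /inv [].
- by exists c0; split; [case: c0_spec | move=> q].
- by move=> i q' [q [? ?]]; exists q.
- by move=> i q q' [H1 H2]; split => //; exists q.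
- move=> i q Hl; exists (ch i q); split.
  + by case: (ch_spec _ _ (proj1 (inv _ _ Hl))).
  + by move=> q'; split; [case | move=> H; split].
Qed.

Lemma edge_size i q q' : Ef i q q' ->
  (fsize AP q' < fsize AP q \/ (q' = q /\ isUR AP q)).
Proof.
case=> Hl Hin; case: (ch_spec _ _ (proj1 (inv _ _ Hl))) => /In_pderiv [m [HL _]] _.
by case: (LF_elems AP q m _ q' HL Hin).
Qed.

Lemma buchi_ok : buchi_accepting (autLTL I phi) Ef.
Proof.
move=> i0 p Hp n.
have mono : forall k j, p (k + j) = p k \/ fsize AP (p (k + j)) < fsize AP (p k).
  move=> k; elim=> [|j IH]; first by rewrite addn0; left.
  case: (edge_size _ _ _ (Hp (k + j))) => [lt|[eq _]]; rewrite addnS.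
  + right; case: IH => [<-|?] //; lia.
  + by rewrite eq.
have stab : forall s k, fsize AP (p k) < s -> exists k0, k <= k0 /\ forall j, p (k0 + j) = p k0.
  elim=> [//|s IH] k Hs.
  case: (classic (forall j, p (k + j) = p k)) => [H|H]; first by exists k.
  case: (not_all_ex_not _ _ H) => j Hj.
  case: (mono k j) => // lt.
  case: (IH (k + j)); first lia.
  move=> k0 [? ?]; exists k0; split => //; lia.
case: (stab (fsize AP (p 0)).+1 0 (ltnSn _)) => k0 [_ Hc].
have [q Eq] : exists q, p k0 = q by eexists.
rewrite Eq in Hc.
exists (k0 + n); split; first lia.
rewrite Hc.
have HE : forall j, Ef (i0 + (k0 + j)) q q.
  move=> j; have := Hp (k0 + j); rewrite Hc -addnS Hc //.
have [Lq [Sq Dq]] : Lf (i0 + k0) q /\ sat (i0 + k0) q /\ In q (dplus phi).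
  case: (HE 0); rewrite addn0 => L0 _; split => //; exact: inv.
case: (edge_size _ _ _ (HE 0)) => [|[_]]; first lia.
clear Hc Lq Eq; move: Sq Dq HE; case: q => // a b Sq Dq HE _.
-
  exfalso; case: Sq => k [hk [hb _]].
  have Hk := HE (k - (i0 + k0)).
  have E1 : i0 + (k0 + (k - (i0 + k0))) = k by lia.
  rewrite E1 in Hk.
  case: Hk => Lk Ik.
  case: (ch_spec _ _ (proj1 (inv _ _ Lk))) => _ [_ /(_ a b erefl hb)] /In_pderiv [m [HL _]].
  case: (LF_elems AP b m _ _ HL Ik) => Db _.
  move: (dplus_size AP _ _ Db) => /=; lia.
- by right; exists a, b.
Qed.

Lemma fwd : accepts (autLTL I phi) sigma.
Proof. exists Lf, Ef; split; [exact: run_ok | exact: buchi_ok]. Qed.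
End Fwd.

Theorem theorem3 (AP : eqType) (Sigma : Type) (I : Sigma -> AP -> bool)
  (phi : form AP) :
  forall sigma : nat -> Sigma,
    sat I sigma 0 phi <-> accepts (autLTL I phi) sigma.
Proof.
move=> sigma; split; first exact: fwd.
case=> L [E [Hrun Hbu]].
have [q0 [Hq0 Hset]] := run_init Hrun.
by apply/(sem_simp AP Sigma I sigma 0 phi); exists q0; split => // f /Hset /(back_all _ _ _ _ _ _ _ Hrun Hbu).
Qed.
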